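(* Let $A\subseteq B$ be a ring extension (commutative rings with identity). Then the following conditions are equivalent: (i) the extension $A\subseteq B$ has the finite character, i.e. every $B$-regular ideal of $A$ is contained in only finitely many maximal ideals of $A$; (ii) for any finitely generated $B$-regular ideal $\mathfrak a$ of $A$, every collection of pairwise comaximal, finitely generated, $B$-regular ideals of $A$ containing $\mathfrak a$ is finite.
   Context: An $A$-submodule $S$ of $B$ is called $B$-regular if $SB=B$. Two ideals $\mathfrak b_1,\mathfrak b_2$ of $A$ are comaximal if $\mathfrak b_1+\mathfrak b_2=A$ (equivalently, here, among proper $B$-regular ideals: no proper $B$-regular ideal contains both); a collection is pairwise comaximal if any two distinct members are comaximal. *)

(* Defs.v *)
From HB Require Import structures.
From mathcomp Require Import all_boot all_order all_algebra.
From mathcomp Require Import boolp classical_sets cardinality.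
Set Implicit Arguments. Unset Strict Implicit. Unset Printing Implicit Defensive.
Import GRing.Theory.
Local Open Scope ring_scope.
Local Open Scope classical_set_scope.

(* A ring extension A ⊆ B is modelled by an injective ring morphism f : A -> B. *)

Definition is_ideal (A : comPzRingType) (I : set A) : Prop :=
  [/\ I 0, (forall x y, I x -> I y -> I (x + y)) & (forall a x, I x -> I (a * x))].

Definition maximal_ideal (A : comPzRingType) (M : set A) : Prop :=
  [/\ is_ideal M, ~ M 1 &
      forall J : set A, is_ideal J -> M `<=` J -> ~ J 1 -> J = M].

Definition ideal_gen (A : comPzRingType) (n : nat) (s : 'I_n -> A) : set A :=
  [set x | exists c : 'I_n -> A, x = \sum_(i < n) c i * s i].

Definition fin_gen (A : comPzRingType) (I : set A) : Prop :=
  exists n (s : 'I_n -> A), I = ideal_gen s.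

Definition ext_span (A B : comPzRingType) (f : A -> B) (S : set A) : set B :=
  [set x | exists n (a : 'I_n -> A) (b : 'I_n -> B),
      (forall i, S (a i)) /\ x = \sum_(i < n) f (a i) * b i].

Definition B_regular (A B : comPzRingType) (f : A -> B) (S : set A) : Prop :=
  ext_span f S = setT.

Definition ideal_sum (A : comPzRingType) (I J : set A) : set A :=
  [set x | exists i j, [/\ I i, J j & x = i + j]].

Definition comaximal (A : comPzRingType) (I J : set A) : Prop :=
  ideal_sum I J = setT.

Definition pairwise_comaximal (A : comPzRingType) (C : set (set A)) : Prop :=
  forall I J, C I -> C J -> I <> J -> comaximal I J.

Definition finite_character (A B : comPzRingType) (f : A -> B) : Prop :=
  forall I : set A, is_ideal I -> B_regular f I ->
    finite_set [set M | maximal_ideal M /\ I `<=` M].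

(* Main.v *)
Require Import Defs.
From HB Require Import structures.
From mathcomp Require Import all_boot all_order all_algebra.
From mathcomp Require Import boolp classical_sets cardinality.
Set Implicit Arguments. Unset Strict Implicit. Unset Printing Implicit Defensive.
Import GRing.Theory.
Local Open Scope classical_set_scope.

Section Helpers.
Local Open Scope ring_scope.
Variable A : comPzRingType.

Lemma ideal_big (I : set A) n (F : 'I_n -> A) :
  is_ideal I -> (forall i, I (F i)) -> I (\sum_(i < n) F i).
Proof.
case=> I0 ID _ HF; apply: (big_ind I) => //; by move=> i _; exact: HF.
Qed.

Lemma ideal_gen_ideal n (s : 'I_n -> A) : is_ideal (ideal_gen s).
Proof.
split.
- by exists (fun _ => 0); rewrite big1 // => i _; rewrite mul0r.
- move=> x y [c ->] [d ->]; exists (fun i => c i + d i).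
  by rewrite -big_split /=; apply: eq_bigr => i _; rewrite mulrDl.
- move=> a x [c ->]; exists (fun i => a * c i).
  by rewrite mulr_sumr; apply: eq_bigr => i _; rewrite mulrA.
Qed.

Lemma ideal_gen_sub (P : set A) n (s : 'I_n -> A) :
  is_ideal P -> (forall i, P (s i)) -> ideal_gen s `<=` P.
Proof.
move=> iP Ps x [c ->]; apply: ideal_big => // i.
by case: iP => _ _ HM; apply: HM.
Qed.

Lemma ideal_gen_mem n (s : 'I_n -> A) i : ideal_gen s (s i).
Proof.
exists (fun j => if j == i then 1 else 0).
rewrite (bigD1 i) //= eqxx mul1r big1 ?addr0 // => j /negbTE ->.
by rewrite mul0r.
Qed.

Lemma ideal_one (I : set A) : is_ideal I -> I 1 -> I = setT.
Proof.
case=> _ _ HM I1; apply/seteqP; split=> // x _.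
by rewrite -(mulr1 x); apply: HM.
Qed.

Lemma ideal_mulr (I : set A) x y : is_ideal I -> I x -> I (x * y).
Proof. by case=> _ _ HM Ix; rewrite mulrC; apply: HM. Qed.

Lemma max_co (M : set A) z : maximal_ideal M -> ~ M z ->
  exists m r, M m /\ 1 = m + r * z.
Proof.
case=> [[M0 MD MM] M1 Mmax] Mz.
pose J := [set y | exists m r, M m /\ y = m + r * z].
have iJ : is_ideal J.
  split.
  - by exists 0, 0; rewrite mul0r addr0.
  - move=> x y [m [r [Mm ->]]] [m' [r' [Mm' ->]]].
    exists (m + m'), (r + r'); split; first exact: MD.
    by rewrite mulrDl addrACA.
  - move=> a x [m [r [Mm ->]]]; exists (a * m), (a * r); split; first exact: MM.
    by rewrite mulrDr mulrA.
have MJ : M `<=` J by move=> m Mm; exists m, 0; rewrite mul0r addr0.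
have : J 1.
  apply: contrapT => J1.
  have := Mmax J iJ MJ J1 => JM; apply: Mz; rewrite -JM.
  by exists 0, 1; rewrite mul1r add0r.
by case=> m [r [Mm e]]; exists m, r.
Qed.

Lemma max_prime (M : set A) x y : maximal_ideal M -> M (x * y) -> M x \/ M y.
Proof.
move=> mM Mxy; case: (pselect (M x)) => Mx; [by left|right].
have [m [r [Mm e]]] := max_co mM Mx.
case: mM => [[M0 MD MM] M1 _].
have -> : y = y * m + r * (x * y).
  by rewrite (mulrC x y) [r * (y * x)]mulrCA -mulrDr -e mulr1.
by apply: MD; [apply: MM|apply: MM].
Qed.

Lemma krull (I : set A) : is_ideal I -> ~ I 1 ->
  exists M, maximal_ideal M /\ I `<=` M.
Proof.
move=> iI I1.
pose P := [set J : set A | J = set0 \/ [/\ is_ideal J, ~ J 1 & I `<=` J]].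
have [M [PM Mmax]] : exists M, P M /\ forall B, M `<` B -> ~ P B.
  apply: Zorn_bigcup => F FP Ftot.
  case: (pselect (\bigcup_(X in F) X = set0)) => [->|U0]; first by left.
  right.
  have [z [X0 FX0 X0z]] : exists z, (\bigcup_(X in F) X) z.
    by apply: contrapT => nz; apply: U0; apply/seteqP; split=> // w Uw; apply: nz; exists w.
  have ideal_of X : F X -> forall w, X w -> [/\ is_ideal X, ~ X 1 & I `<=` X].
    move=> FX w Xw; case: (FP X FX) => // Xe; by rewrite Xe in Xw.
  have [[X00 _ _] _ IX0] := ideal_of X0 FX0 z X0z.
  split.
  - split.
    + by exists X0.
    + move=> x y [X1 FX1 X1x] [X2 FX2 X2y].
      have [[_ D1 _] _ _] := ideal_of X1 FX1 x X1x.
      have [[_ D2 _] _ _] := ideal_of X2 FX2 y X2y.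
      case: (Ftot X1 X2 FX1 FX2) => S12.
      * by exists X2 => //; apply: D2 => //; apply: S12.
      * by exists X1 => //; apply: D1 => //; apply: S12.
    + move=> a x [X1 FX1 X1x]; have [[_ _ M1] _ _] := ideal_of X1 FX1 x X1x.
      by exists X1 => //; apply: M1.
  - by move=> [X1 FX1 X11]; have [_ + _] := ideal_of X1 FX1 1 X11.
  - by move=> w Iw; exists X0 => //; apply: IX0.
have iM : [/\ is_ideal M, ~ M 1 & I `<=` M].
  have PI : P I by rewrite /P/=; right; split.
  case: PM => // M0; exfalso; apply: (Mmax I) => //.
  rewrite M0; split=> //; move/(_ 0); apply=> //; by case: iI.
case: iM => iMM M1 IM; exists M; split=> //; split=> // J iJ MJ J1.
apply: contrapT => JM; apply: (Mmax J); last by rewrite /P/=; right; split=> //; apply: subset_trans MJ.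
split=> // JM'; apply: JM; apply/seteqP; split=> //.
Qed.

Lemma comax_of (I J : set A) u v : is_ideal I -> is_ideal J -> I u -> J v ->
  u + v = 1 -> comaximal I J.
Proof.
move=> [_ _ MI] [_ _ MJ] Iu Jv e; apply/seteqP; split=> // x _.
exists (x * u), (x * v); split; [exact: MI|exact: MJ|].
by rewrite -mulrDr e mulr1.
Qed.

Definition ext n (s : 'I_n -> A) (x : A) : 'I_n.+1 -> A :=
  fun i => if unlift ord0 i is Some j then s j else x.

Lemma ext_sub n (s : 'I_n -> A) x : ideal_gen s `<=` ideal_gen (ext s x).
Proof.
move=> z [c ->]; exists (fun i => if unlift ord0 i is Some j then c j else 0).
rewrite big_ord_recl /ext unlift_none mul0r add0r.
by apply: eq_bigr => i _; rewrite liftK.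
Qed.

Lemma ext_mem n (s : 'I_n -> A) x : ideal_gen (ext s x) x.
Proof.
have := ideal_gen_mem (ext s x) ord0; by rewrite /ext unlift_none.
Qed.

End Helpers.
Section Seq.
Local Open Scope ring_scope.
Variable A : comPzRingType.
Variable a : set A.

Definition Y (g : A) := [set M : set A | maximal_ideal M /\ a `<=` M /\ ~ M g].

Lemma two_points (S : set (set A)) : ~ finite_set S ->
  exists M N, [/\ S M, S N & M <> N].
Proof.
move=> iS; have [M SM] := infinite_setN0 iS.
have iS' : ~ finite_set (S `\` [set M]).
  move=> fS; apply: iS; apply: (@sub_finite_set _ _ ((S `\` [set M]) `|` [set M])).
    by move=> X SX; case: (pselect (X = M)) => [->|XM]; [right|left].
  by rewrite finite_setU; split.
have [N [SN NM]] := infinite_setN0 iS'.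
by exists M, N; split=> // e; apply: NM; rewrite e.
Qed.

Lemma step g : ~ finite_set (Y g) -> exists x,
  [/\ exists u v, 1 = u * x + v * g,
      exists M, [/\ maximal_ideal M, a `<=` M & M x] &
      ~ finite_set (Y (g * x))].
Proof.
move=> iY; have [M [N [[mM [aM Mg]] [mN [aN Ng]] MN]]] := two_points iY.
have [n1 [Nn1 Mn1]] : exists n1, N n1 /\ ~ M n1.
  apply: contrapT => H; apply: MN.
  case: mN => _ _ Nmax; apply: Nmax; first by case: mM.
  - by move=> z Nz; apply: contrapT => Mz; apply: H; exists z.
  - by case: mM.
have Mn1g : ~ M (n1 * g) by case/(max_prime mM).
have [x [r [Mx ex]]] := max_co mM Mn1g.
have iN := mN; case: iN => [[N0 ND NM] N1 _].
have Nx : ~ N x.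
  move=> Nx; apply: N1; rewrite ex; apply: ND => //; apply: NM.
  by apply: ideal_mulr => //; case: mN.
have Nxg : ~ N (x * g) by case/(max_prime mN).
have [q [t [Nq eq]]] := max_co mN Nxg.
have iM := mM; case: iM => [[M0 MD MM] M1 _].
case: (pselect (finite_set (Y (g * x)))) => fx; last first.
  exists x; split=> //.
  - by exists 1, (r * n1); rewrite mul1r ex -mulrA.
  - by exists M.
case: (pselect (finite_set (Y (g * q)))) => fq; last first.
  exists q; split=> //.
  - by exists 1, (t * x); rewrite mul1r eq -mulrA.
  - by exists N.
exfalso; apply: iY; apply: (@sub_finite_set _ _ (Y (g * x) `|` Y (g * q))); last first.
  by rewrite finite_setU.
move=> P [mP [aP Pg]].
have iP := mP; case: iP => [[P0 PD PM] P1 _].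
case: (pselect (P x)) => Px; last first.
  by left; split=> //; split=> //; case/(max_prime mP).
case: (pselect (P q)) => Pq; last first.
  by right; split=> //; split=> //; case/(max_prime mP).
exfalso; apply: P1; rewrite eq; apply: PD => //; apply: PM.
by apply: ideal_mulr => //; case: mP.
Qed.

Lemma seq_exists : ~ finite_set (Y 1) -> exists x : nat -> A,
  (forall k, exists M, [/\ maximal_ideal M, a `<=` M & M (x k)]) /\
  (forall k m, (k < m)%N -> exists u v, 1 = u * x m + v * x k).
Proof.
move=> iY1.
have : forall g, exists x, ~ finite_set (Y g) ->
  [/\ exists u v, 1 = u * x + v * g,
      exists M, [/\ maximal_ideal M, a `<=` M & M x] &
      ~ finite_set (Y (g * x))].
  move=> g; case: (pselect (finite_set (Y g))) => fg.
    by exists 0.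
  by have [x Hx] := step fg; exists x.
case/boolp.choice => st Hst.
pose gs k := iter k (fun g => g * st g) 1.
have inv k : ~ finite_set (Y (gs k)).
  elim: k => [//|k IH]; by have [_ _] := Hst _ IH.
have dv k m : (k < m)%N -> exists w, gs m = w * st (gs k).
  elim: m => [//|m IH]; rewrite ltnS leq_eqVlt => /orP[/eqP <-|/IH [w ew]].
    by exists (gs k); rewrite /gs iterS.
  by exists (w * st (gs m)); rewrite /gs iterS -/(gs m) ew mulrAC.
exists (fun k => st (gs k)); split.
  by move=> k; have [_ + _] := Hst _ (inv k).
move=> k m km; have [[u [v e]] _ _] := Hst _ (inv m).
have [w ew] := dv k m km.
by exists u, (v * w); rewrite e ew mulrA.
Qed.

End Seq.

Local Open Scope ring_scope.

Lemma comax_sym (A : comPzRingType) (I J : set A) : comaximal I J -> comaximal J I.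
Proof.
move=> c; apply/seteqP; split=> // z _.
have : ideal_sum I J z by rewrite /comaximal in c; rewrite c.
by case=> i [j [Ii Jj ->]]; exists j, i; split=> //; rewrite addrC.
Qed.

Lemma comax_self (A : comPzRingType) (I : set A) : is_ideal I -> comaximal I I -> I 1.
Proof.
move=> [_ D _] c; have : ideal_sum I I 1 by rewrite /comaximal in c; rewrite c.
by case=> i [j [Ii Ij ->]]; apply: D.
Qed.

Theorem corollary3p3 (A B : comPzRingType) (f : {rmorphism A -> B})
    (f_inj : injective f) :
  finite_character f <->
  (forall a : set A, is_ideal a -> fin_gen a -> B_regular f a ->
     forall C : set (set A),
       (forall I, C I -> [/\ is_ideal I, fin_gen I, B_regular f I & a `<=` I]) ->
       pairwise_comaximal C -> finite_set C).
Proof.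
split.
- move=> fc a ia fga rega C HC pc.
  have fX := fc a ia rega.
  have : forall M : set A, exists I : set A,
      (exists I, C I /\ I `<=` M) -> C I /\ I `<=` M.
    move=> M; case: (pselect (exists I, C I /\ I `<=` M)) => [[I HI]|nH].
      by exists I.
    by exists setT.
  case/boolp.choice => psi Hpsi.
  apply: (@sub_finite_set _ _
    ([set setT] `|` psi @` [set M | maximal_ideal M /\ a `<=` M])); last first.
    by rewrite finite_setU; split => //; apply: finite_image.
  move=> I CI; have [iI _ _ aI] := HC I CI.
  case: (pselect (I 1)) => I1; first by left; apply: ideal_one.
  right; have [M [mM IM]] := krull iI I1.
  exists M; first by split => //; apply: subset_trans IM.
  have [CpM pMM] := Hpsi M (ex_intro _ I (conj CI IM)).
  apply: contrapT => ne; have := pc _ _ CpM CI ne => e.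
  have : ideal_sum (psi M) I 1 by rewrite /comaximal in e; rewrite e.
  case=> i [j [pi Ij e1]].
  case: mM => [[_ MD _] M1 _]; apply: M1; rewrite e1; apply: MD.
    exact: pMM.
  exact: IM.
- move=> H I iI rega; apply: contrapT => iX.
  have : ext_span f I 1 by rewrite /B_regular in rega; rewrite rega.
  case=> n [s [b [Is e1]]].
  pose a0 := ideal_gen s.
  have ia0 : is_ideal a0 := ideal_gen_ideal s.
  have a0I : a0 `<=` I := ideal_gen_sub iI Is.
  have reg0 : B_regular f a0.
    apply/seteqP; split=> // y _; exists n, s, (fun i => b i * y); split.
      by move=> i; apply: ideal_gen_mem.
    by rewrite -[LHS]mul1r {1}e1 mulr_suml; apply: eq_bigr => i _; rewrite mulrA.
  have iY1 : ~ finite_set (Y a0 1).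
    move=> fY; apply: iX; apply: sub_finite_set fY.
    move=> M [mM IM]; split => //; split; first exact: subset_trans a0I IM.
    by case: mM.
  have [x [xM xc]] := seq_exists iY1.
  pose J k := ideal_gen (ext s (x k)).
  have iJ k : is_ideal (J k) := ideal_gen_ideal _.
  have J1 k : ~ J k 1.
    have [M [mM aM Mx]] := xM k; move=> Jk1; case: mM => [iM M1 _]; apply: M1.
    apply: (ideal_gen_sub iM _ Jk1) => i; rewrite /ext; case: unlift => [j|] //.
    by apply: aM; apply: ideal_gen_mem.
  have comJ k m : (k < m)%N -> comaximal (J k) (J m).
    move=> km; have [u [v e]] := xc k m km.
    apply: (@comax_of _ _ _ (v * x k) (u * x m)) => //.
    + by case: (iJ k) => _ _ MJ; apply: MJ; apply: ext_mem.
    + by case: (iJ m) => _ _ MJ; apply: MJ; apply: ext_mem.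
    + by rewrite addrC -e.
  have comJ' k m : k <> m -> comaximal (J k) (J m).
    move=> ne; case: (ltngtP k m) => km.
    + exact: comJ.
    + exact/comax_sym/comJ.
    + by exfalso; apply: ne.
  have Jinj : injective J.
    move=> k m e; apply: contrapT => ne; apply: (J1 m).
    apply: comax_self => //; have := comJ' k m ne; by rewrite e.
  have fR : finite_set (range J).
  apply: (H a0 ia0 (ex_intro _ n (ex_intro _ s erefl)) reg0 (range J)).
  + move=> _ [k _ <-]; split.
    * exact: iJ.
    * by exists n.+1, (ext s (x k)).
    * apply/seteqP; split=> // y _.
      have : ext_span f a0 y by rewrite /B_regular in reg0; rewrite reg0.
      case=> n' [a' [b' [Ha ->]]]; exists n', a', b'; split=> // i.
      by apply: ext_sub; apply: Ha.
    * exact: ext_sub.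
  + by move=> _ _ [k _ <-] [m _ <-] ne; apply: comJ' => km; apply: ne; rewrite km.
  apply: infinite_nat.
  apply: (@sub_finite_set _ _ (J @^-1` range J)); first by move=> k _; exists k.
  by apply: finite_preimage => // k m _ _; apply: Jinj.
Qed.
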